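(* Let $X$ be any space and let $A$ be a homotopy cut-set for paths $\alpha,\beta:[0,1]\to X$ such that $\alpha(A)\subseteq X\setminus\mathbf{aw}(X)$. Then $\alpha\simeq\beta$.
   Context: $\simeq$ is path-homotopy. A loop is trivial if path-homotopic to a constant loop. A sequence of loops $\alpha_n$ based at $x$ is a null-sequence if every neighborhood of $x$ contains $\alpha_n([0,1])$ for all but finitely many $n$. $\mathbf{aw}(X)=\{x\in X\mid \text{there is a null-sequence of non-trivial loops based at }x\}$. For paths $\alpha,\beta:[s,t]\to X$, a set $A\subseteq[s,t]$ is a homotopy cut-set for $\alpha,\beta$ if $A$ is closed, nowhere dense, contains $\{s,t\}$, $\alpha|_A=\beta|_A$, and $\alpha|_{[a,b]}\simeq\beta|_{[a,b]}$ for every component $(a,b)$ of $[s,t]\setminus A$. *)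

(* Defs.v *)
From Stdlib Require Import Reals.
Open Scope R_scope.

Record TopSpace := {
  pt :> Type;
  isOpen : (pt -> Prop) -> Prop;
  open_full : isOpen (fun _ => True);
  open_inter : forall U V, isOpen U -> isOpen V -> isOpen (fun x => U x /\ V x);
  open_union : forall F : (pt -> Prop) -> Prop,
      (forall U, F U -> isOpen U) -> isOpen (fun x => exists U, F U /\ U x)
}.

Definition interval (s t : R) (u : R) : Prop := s <= u <= t.

Definition cont_on {X : TopSpace} (D : R -> Prop) (f : R -> X) : Prop :=
  forall x, D x -> forall U, isOpen X U -> U (f x) ->
    exists d, 0 < d /\ forall y, D y -> Rabs (y - x) < d -> U (f y).

Definition cont_on2 {X : TopSpace} (D : R -> R -> Prop) (H : R -> R -> X) : Prop :=
  forall r u, D r u -> forall U, isOpen X U -> U (H r u) ->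
    exists d, 0 < d /\ forall r' u', D r' u' -> Rabs (r' - r) < d ->
      Rabs (u' - u) < d -> U (H r' u').

Definition is_path {X : TopSpace} (s t : R) (a : R -> X) : Prop :=
  cont_on (interval s t) a.

Definition path_homotopic {X : TopSpace} (s t : R) (a b : R -> X) : Prop :=
  exists H : R -> R -> X,
    cont_on2 (fun r u => interval 0 1 r /\ interval s t u) H /\
    (forall u, interval s t u -> H 0 u = a u) /\
    (forall u, interval s t u -> H 1 u = b u) /\
    (forall r, interval 0 1 r -> H r s = a s /\ H r t = a t).

Definition is_loop {X : TopSpace} (x : X) (g : R -> X) : Prop :=
  is_path 0 1 g /\ g 0 = x /\ g 1 = x.

Definition trivial_loop {X : TopSpace} (x : X) (g : R -> X) : Prop :=
  path_homotopic 0 1 g (fun _ => x).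

Definition null_sequence {X : TopSpace} (x : X) (g : nat -> R -> X) : Prop :=
  (forall n, is_loop x (g n)) /\
  forall U, isOpen X U -> U x ->
    exists N, forall n, (N <= n)%nat -> forall u, interval 0 1 u -> U (g n u).

Definition aw (X : TopSpace) (x : X) : Prop :=
  exists g : nat -> R -> X, null_sequence x g /\ forall n, ~ trivial_loop x (g n).

Definition closedR (A : R -> Prop) : Prop :=
  forall x, ~ A x -> exists d, 0 < d /\ forall y, Rabs (y - x) < d -> ~ A y.

(* closed A is nowhere dense iff it contains no nonempty open interval *)
Definition nowhere_denseR (A : R -> Prop) : Prop :=
  forall a b, a < b -> ~ (forall u, a < u < b -> A u).

(* (a,b) is a component of [s,t] \ A (for closed A containing s,t) *)
Definition gap (s t : R) (A : R -> Prop) (a b : R) : Prop :=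
  s <= a /\ a < b /\ b <= t /\ A a /\ A b /\ forall u, a < u < b -> ~ A u.

Definition homotopy_cut_set {X : TopSpace} (s t : R) (a b : R -> X)
    (A : R -> Prop) : Prop :=
  (forall u, A u -> interval s t u) /\
  closedR A /\ nowhere_denseR A /\ A s /\ A t /\
  (forall u, A u -> a u = b u) /\
  (forall c d, gap s t A c d -> path_homotopic c d a b).

(* Main.v *)
Require Import Defs.
From Stdlib Require Import Reals Lra Classical ClassicalEpsilon.
Open Scope R_scope.

Lemma comp2 {X : TopSpace} (D D' : R -> R -> Prop) (H : R -> R -> X)
  (f g : R -> R -> R) (L : R) :
  0 <= L -> cont_on2 D' H ->
  (forall r u, D r u -> D' (f r u) (g r u)) ->
  (forall r u r' u', D r u -> D r' u' ->
     Rabs (f r' u' - f r u) <= L * (Rabs (r'-r) + Rabs (u'-u))) ->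
  (forall r u r' u', D r u -> D r' u' ->
     Rabs (g r' u' - g r u) <= L * (Rabs (r'-r) + Rabs (u'-u))) ->
  cont_on2 D (fun r u => H (f r u) (g r u)).
Proof.
  intros HL HH Hm Hf Hg r u Dru U HU HUx.
  destruct (HH _ _ (Hm _ _ Dru) U HU HUx) as [d [Hd Hd']].
  set (e := d / (2*L+1)).
  assert (He : 0 < e) by (unfold e; apply Rdiv_lt_0_compat; lra).
  assert (Hde : d = e * (2*L+1)) by (unfold e; field; lra).
  exists e. split; [exact He|].
  intros r' u' Dr' Hr Hu.
  assert (Hsum : L * (Rabs (r'-r) + Rabs (u'-u)) < d).
  { assert (L * (Rabs (r'-r) + Rabs (u'-u)) <= L * (2 * e)).
    { apply Rmult_le_compat_l; lra. }
    nra. }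
  apply Hd'.
  - apply Hm; auto.
  - specialize (Hf _ _ _ _ Dru Dr'). lra.
  - specialize (Hg _ _ _ _ Dru Dr'). lra.
Qed.

Lemma paste2 {X : TopSpace} (s m t : R) (H1 H2 : R -> R -> X) :
  s <= m <= t ->
  cont_on2 (fun r u => interval 0 1 r /\ interval s m u) H1 ->
  cont_on2 (fun r u => interval 0 1 r /\ interval m t u) H2 ->
  (forall r, interval 0 1 r -> H1 r m = H2 r m) ->
  cont_on2 (fun r u => interval 0 1 r /\ interval s t u)
    (fun r u => if Rle_dec u m then H1 r u else H2 r u).
Proof.
  intros Hm C1 C2 E r u [Hr Hu] U HU HUx. unfold interval in *.
  destruct (Rle_dec u m) as [Hum|Hum].
  - destruct (Req_dec u m) as [Heq|Hne].
    + subst u.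
      destruct (C1 r m (conj Hr (conj (proj1 Hm) (Rle_refl m))) U HU HUx)
        as [d1 [Hd1 Hd1']].
      rewrite E in HUx by auto.
      destruct (C2 r m (conj Hr (conj (Rle_refl m) (proj2 Hm))) U HU HUx)
        as [d2 [Hd2 Hd2']].
      exists (Rmin d1 d2). split; [apply Rmin_pos; auto|].
      intros r' u' [Hr' Hu'] Hrr Huu.
      pose proof (Rmin_l d1 d2). pose proof (Rmin_r d1 d2).
      destruct (Rle_dec u' m).
      * apply Hd1'; [split; [auto|lra] | lra | lra].
      * apply Hd2'; [split; [auto|lra] | lra | lra].
    + destruct (C1 r u (conj Hr (conj (proj1 Hu) Hum)) U HU HUx)
        as [d1 [Hd1 Hd1']].
      exists (Rmin d1 (m-u)). split; [apply Rmin_pos; lra|].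
      intros r' u' [Hr' Hu'] Hrr Huu.
      pose proof (Rmin_l d1 (m-u)). pose proof (Rmin_r d1 (m-u)).
      assert (Huu' : Rabs (u'-u) < m - u) by lra.
      apply Rabs_def2 in Huu'.
      destruct (Rle_dec u' m); [|lra].
      apply Hd1'; [split; [auto|lra] | lra | lra].
  - destruct (C2 r u (conj Hr (conj (Rlt_le _ _ (Rnot_le_lt _ _ Hum)) (proj2 Hu))) U HU HUx)
        as [d1 [Hd1 Hd1']].
    exists (Rmin d1 (u-m)). split; [apply Rmin_pos; lra|].
    intros r' u' [Hr' Hu'] Hrr Huu.
    pose proof (Rmin_l d1 (u-m)). pose proof (Rmin_r d1 (u-m)).
    assert (Huu' : Rabs (u'-u) < u - m) by lra.
    apply Rabs_def2 in Huu'.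
    destruct (Rle_dec u' m); [lra|].
    apply Hd1'; [split; [auto|lra] | lra | lra].
Qed.

Lemma cont1_to2 {X : TopSpace} (D : R -> Prop) (f : R -> X) :
  cont_on D f -> cont_on2 (fun r u => interval 0 1 r /\ D u) (fun r u => f u).
Proof.
  intros C r u [_ Du] U HU HUx.
  destruct (C u Du U HU HUx) as [d [Hd Hd']].
  exists d. split; auto. intros r' u' [_ Du'] _ Hu. apply Hd'; auto.
Qed.

Lemma cont2_to1 {X : TopSpace} (D : R -> Prop) (f : R -> X) :
  cont_on2 (fun r u => interval 0 1 r /\ D u) (fun r u => f u) -> cont_on D f.
Proof.
  intros C u Du U HU HUx.
  assert (H0 : interval 0 1 0) by (unfold interval; lra).
  destruct (C 0 u (conj H0 Du) U HU HUx) as [d [Hd Hd']].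
  exists d. split; auto. intros y Dy Hy. apply (Hd' 0 y); auto.
  rewrite Rminus_0_r, Rabs_R0; lra.
Qed.

Lemma concat {X : TopSpace} (a b : R -> X) s m t : s <= m <= t ->
  path_homotopic s m a b -> path_homotopic m t a b -> path_homotopic s t a b.
Proof.
  intros Hm [H1 [C1 [A1 [B1 E1]]]] [H2 [C2 [A2 [B2 E2]]]].
  exists (fun r u => if Rle_dec u m then H1 r u else H2 r u).
  unfold interval in *.
  split; [|split; [|split]].
  - apply paste2; auto.
    intros r Hr. destruct (E1 r Hr) as [_ ->]. destruct (E2 r Hr) as [-> _]. auto.
  - intros u Hu. destruct (Rle_dec u m).
    + apply A1; lra.
    + apply A2; lra.
  - intros u Hu. destruct (Rle_dec u m).
    + apply B1; lra.
    + apply B2; lra.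
  - intros r Hr. split.
    + destruct (Rle_dec s m); [|lra]. apply (E1 r Hr).
    + destruct (Rle_dec t m).
      * assert (t = m) by lra. subst t. apply (E1 r Hr).
      * apply (E2 r Hr).
Qed.

Definition rho (r : R) := Rmin 1 (Rmin (3*r) (3-3*r)).
Definition wfun (r : R) := Rmin 1 (Rmax 0 (3*r-1)).

Lemma rho_bd r : 0 <= r <= 1 -> 0 <= rho r <= 1.
Proof. intros. unfold rho, Rmin; repeat destruct Rle_dec; lra. Qed.
Lemma wfun_bd r : 0 <= r <= 1 -> 0 <= wfun r <= 1.
Proof. intros. unfold wfun, Rmin, Rmax; repeat destruct Rle_dec; lra. Qed.
Lemma rho_lip r r' : Rabs (rho r' - rho r) <= 3 * Rabs (r' - r).
Proof. unfold rho, Rmin, Rabs; repeat destruct Rle_dec; repeat destruct Rcase_abs; lra. Qed.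
Lemma wfun_lip r r' : Rabs (wfun r' - wfun r) <= 3 * Rabs (r' - r).
Proof. unfold wfun, Rmin, Rmax, Rabs; repeat destruct Rle_dec; repeat destruct Rcase_abs; lra. Qed.
Lemma rho0 : rho 0 = 0. Proof. unfold rho, Rmin; repeat destruct Rle_dec; lra. Qed.
Lemma rho1 : rho 1 = 0. Proof. unfold rho, Rmin; repeat destruct Rle_dec; lra. Qed.
Lemma wfun0 : wfun 0 = 0. Proof. unfold wfun, Rmin, Rmax; repeat destruct Rle_dec; lra. Qed.
Lemma wfun1 : wfun 1 = 1. Proof. unfold wfun, Rmin, Rmax; repeat destruct Rle_dec; lra. Qed.
Lemma side r : 0 <= r <= 1 -> rho r = 1 \/ wfun r = 0 \/ wfun r = 1.
Proof. intros. unfold rho, wfun, Rmin, Rmax; repeat destruct Rle_dec; lra. Qed.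

Lemma prodbound a a' c c' : 0 <= a' <= 1 -> 0 <= c <= 1 ->
  Rabs (a'*c' - a*c) <= Rabs (c'-c) + Rabs (a'-a).
Proof.
  intros Ha Hc.
  replace (a'*c' - a*c) with (a'*(c'-c) + c*(a'-a)) by ring.
  eapply Rle_trans; [apply Rabs_triang|].
  rewrite !Rabs_mult, (Rabs_pos_eq a') by lra. rewrite (Rabs_pos_eq c) by lra.
  pose proof (Rabs_pos (c'-c)). pose proof (Rabs_pos (a'-a)). nra.
Qed.

Definition loopf {X : TopSpace} (a b : R -> X) (p q : R) : R -> X :=
  fun w => if Rle_dec w (1/2) then a (p + 2*w*(q-p)) else b (q + (2*w-1)*(p-q)).

Lemma vbound p q u : p <> q -> (p <= u <= q \/ q <= u <= p) ->
  0 <= (u-p)/(q-p) <= 1.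
Proof.
  intros Hpq Hu. unfold Rdiv.
  assert (Hk : (q-p) * / (q-p) = 1) by (field; lra).
  destruct (Rlt_dec p q).
  - assert (0 < / (q-p)) by (apply Rinv_0_lt_compat; lra).
    destruct Hu; nra.
  - assert (/ (q-p) < 0) by (apply Rinv_lt_0_compat; lra).
    destruct Hu; nra.
Qed.

Lemma loop_triv {X : TopSpace} (a b : R -> X) p q lo hi :
  p <> q -> a q = b q -> a p = b p ->
  ((lo = p /\ hi = q) \/ (lo = q /\ hi = p)) ->
  trivial_loop (a p) (loopf a b p q) -> path_homotopic lo hi a b.
Proof.
  intros Hpq Eq Ep Hlh [H [HC [H0 [H1 Hend]]]].
  set (K := / Rabs (q-p)).
  assert (HK : 0 <= K) by (unfold K; apply Rlt_le, Rinv_0_lt_compat, Rabs_pos_lt; lra).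
  assert (Hrng : forall u, interval lo hi u -> p <= u <= q \/ q <= u <= p).
  { unfold interval; intros u Hu; destruct Hlh as [[-> ->]|[-> ->]]; auto. }
  assert (Hvlip : forall u u', Rabs ((u'-p)/(q-p) - (u-p)/(q-p)) = K * Rabs (u'-u)).
  { intros u u'. replace ((u'-p)/(q-p) - (u-p)/(q-p)) with ((u'-u) * /(q-p)) by (field; lra).
    rewrite Rabs_mult, Rabs_inv. unfold K. ring. }
  exists (fun r u => H ((1 - (u-p)/(q-p)) * rho r)
                      ((1 - (u-p)/(q-p)) * wfun r + ((u-p)/(q-p))/2)).
  split; [|split; [|split]].
  - apply (comp2 _ (fun r u => interval 0 1 r /\ interval 0 1 u) H _ _ (3 + 2*K)).
    + lra.
    + exact HC.
    + intros r u [Hr Hu]. pose proof (vbound p q u Hpq (Hrng u Hu)).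
      unfold interval in *. pose proof (rho_bd r Hr). pose proof (wfun_bd r Hr).
      split; nra.
    + intros r u r' u' [Hr Hu] [Hr' Hu'].
      pose proof (vbound p q u Hpq (Hrng u Hu)). pose proof (vbound p q u' Hpq (Hrng u' Hu')).
      unfold interval in *. pose proof (rho_bd r Hr).
      eapply Rle_trans; [apply prodbound; lra|].
      replace ((1 - (u'-p)/(q-p)) - (1 - (u-p)/(q-p))) with (-((u'-p)/(q-p) - (u-p)/(q-p))) by ring.
      rewrite Rabs_Ropp, Hvlip. pose proof (rho_lip r r').
      pose proof (Rabs_pos (r'-r)). pose proof (Rabs_pos (u'-u)). nra.
    + intros r u r' u' [Hr Hu] [Hr' Hu'].
      pose proof (vbound p q u Hpq (Hrng u Hu)). pose proof (vbound p q u' Hpq (Hrng u' Hu')).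
      unfold interval in *. pose proof (wfun_bd r Hr).
      set (v := (u-p)/(q-p)) in *. set (v' := (u'-p)/(q-p)) in *.
      replace ((1 - v') * wfun r' + v' / 2 - ((1 - v) * wfun r + v / 2))
        with (((1 - v') * wfun r' - (1 - v) * wfun r) + (v' - v)/2) by field.
      eapply Rle_trans; [apply Rabs_triang|].
      eapply Rle_trans; [apply Rplus_le_compat_r; apply prodbound; lra|].
      replace ((1 - v') - (1 - v)) with (-(v' - v)) by ring.
      rewrite Rabs_Ropp.
      replace ((v' - v)/2) with ((v'-v) * /2) by reflexivity. rewrite Rabs_mult.
      rewrite (Rabs_pos_eq (/2)) by lra.
      unfold v, v'. rewrite Hvlip. pose proof (wfun_lip r r').
      pose proof (Rabs_pos (r'-r)). pose proof (Rabs_pos (u'-u)). nra.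
  - intros u Hu. pose proof (vbound p q u Hpq (Hrng u Hu)).
    rewrite rho0, wfun0.
    replace ((1 - (u - p) / (q - p)) * 0) with 0 by ring.
    replace (0 + (u - p) / (q - p) / 2) with ((u - p) / (q - p) / 2) by ring.
    rewrite H0 by (unfold interval; lra).
    unfold loopf. destruct Rle_dec; [|lra].
    f_equal. field. lra.
  - intros u Hu. pose proof (vbound p q u Hpq (Hrng u Hu)).
    rewrite rho1, wfun1.
    replace ((1 - (u - p) / (q - p)) * 0) with 0 by ring.
    assert (Hv : p + (u - p) / (q - p) * (q-p) = u) by (field; lra).
    set (v := (u-p)/(q-p)) in *.
    replace ((1 - v) * 1 + v / 2) with (1 - v/2) by field.
    rewrite H0 by (unfold interval; lra).
    unfold loopf. destruct Rle_dec.
    + assert (Hv1 : v = 1) by lra.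
      assert (Huq : u = q) by (rewrite <- Hv; rewrite Hv1; ring).
      rewrite Huq. rewrite <- Eq. f_equal. rewrite Hv1; field.
    + f_equal. transitivity (p + v*(q-p)); [field | exact Hv].
  - assert (Gp : forall r, interval 0 1 r ->
       H ((1 - (p-p)/(q-p)) * rho r) ((1 - (p-p)/(q-p)) * wfun r + ((p-p)/(q-p))/2) = a p).
    { intros r Hr.
      replace ((p-p)/(q-p)) with 0 by (field; lra).
      replace ((1-0)*rho r) with (rho r) by ring.
      replace ((1-0)*wfun r + 0/2) with (wfun r) by field.
      unfold interval in Hr. pose proof (rho_bd r Hr). pose proof (wfun_bd r Hr).
      destruct (side r Hr) as [E|[E|E]]; rewrite E.
      - rewrite H1 by (unfold interval; lra). reflexivity.
      - destruct (Hend (rho r) ltac:(unfold interval; lra)) as [-> _].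
        unfold loopf. destruct Rle_dec; [|lra]. f_equal; ring.
      - destruct (Hend (rho r) ltac:(unfold interval; lra)) as [_ ->].
        unfold loopf. destruct Rle_dec; [lra|]. rewrite Ep. f_equal; ring. }
    assert (Gq : forall r, interval 0 1 r ->
       H ((1 - (q-p)/(q-p)) * rho r) ((1 - (q-p)/(q-p)) * wfun r + ((q-p)/(q-p))/2) = a q).
    { intros r Hr.
      replace ((q-p)/(q-p)) with 1 by (field; lra).
      replace ((1-1)*rho r) with 0 by ring.
      replace ((1-1)*wfun r + 1/2) with (1/2) by field.
      rewrite H0 by (unfold interval; lra).
      unfold loopf. destruct Rle_dec; [|lra]. f_equal; field. }
    intros r Hr. destruct Hlh as [[-> ->]|[-> ->]]; split; auto.
Qed.

Lemma convex_in x y s : 0 <= s <= 1 -> interval 0 1 x -> interval 0 1 y ->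
  interval 0 1 (x + s*(y-x)).
Proof. unfold interval; intros; nra. Qed.

Lemma convex_dist x y s : 0 <= s <= 1 -> Rabs (x + s*(y-x) - x) <= Rabs (y-x).
Proof.
  intros Hs. replace (x + s*(y-x) - x) with (s*(y-x)) by ring.
  rewrite Rabs_mult, (Rabs_pos_eq s) by lra. pose proof (Rabs_pos (y-x)). nra.
Qed.

Lemma convex_dist2 x y s : 0 <= s <= 1 -> Rabs (x + s*(y-x) - y) <= Rabs (y-x).
Proof.
  intros Hs. replace (x + s*(y-x) - y) with ((1-s)*(x-y)) by ring.
  rewrite Rabs_mult, (Rabs_pos_eq (1-s)) by lra. rewrite Rabs_minus_sym.
  pose proof (Rabs_pos (y-x)). nra.
Qed.

Lemma loop_is_path {X : TopSpace} (a b : R -> X) p q :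
  is_path 0 1 a -> is_path 0 1 b -> interval 0 1 p -> interval 0 1 q -> a q = b q ->
  is_path 0 1 (loopf a b p q).
Proof.
  intros Ha Hb Hp Hq Eq. unfold is_path. apply cont2_to1. unfold loopf.
  apply (paste2 0 (1/2) 1 (fun r w => a (p+2*w*(q-p))) (fun r w => b (q + (2*w-1)*(p-q)))).
  - lra.
  - apply (comp2 _ (fun r u => interval 0 1 r /\ interval 0 1 u) (fun r u => a u)
       (fun r w => r) (fun r w => p+2*w*(q-p)) (1 + 2*Rabs(q-p))).
    + pose proof (Rabs_pos (q-p)). lra.
    + apply cont1_to2. exact Ha.
    + intros r u [Hr Hu]. split; auto.
      replace (p + 2*u*(q-p)) with (p + (2*u)*(q-p)) by ring.
      apply convex_in; auto. unfold interval in Hu; lra.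
    + intros r u r' u' _ _. pose proof (Rabs_pos (q-p)).
      pose proof (Rabs_pos (r'-r)). pose proof (Rabs_pos (u'-u)). nra.
    + intros r u r' u' _ _.
      replace (p + 2*u'*(q-p) - (p + 2*u*(q-p))) with (2*(q-p)*(u'-u)) by ring.
      rewrite !Rabs_mult, (Rabs_pos_eq 2) by lra. pose proof (Rabs_pos (q-p)).
      pose proof (Rabs_pos (r'-r)). pose proof (Rabs_pos (u'-u)). nra.
  - apply (comp2 _ (fun r u => interval 0 1 r /\ interval 0 1 u) (fun r u => b u)
       (fun r w => r) (fun r w => q + (2*w-1)*(p-q)) (1 + 2*Rabs(q-p))).
    + pose proof (Rabs_pos (q-p)). lra.
    + apply cont1_to2. exact Hb.
    + intros r u [Hr Hu]. split; auto.
      apply convex_in; auto. unfold interval in Hu; lra.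
    + intros r u r' u' _ _. pose proof (Rabs_pos (q-p)).
      pose proof (Rabs_pos (r'-r)). pose proof (Rabs_pos (u'-u)). nra.
    + intros r u r' u' _ _.
      replace (q + (2*u'-1)*(p-q) - (q + (2*u-1)*(p-q))) with (2*(-(q-p))*(u'-u)) by ring.
      rewrite !Rabs_mult, Rabs_Ropp, (Rabs_pos_eq 2) by lra. pose proof (Rabs_pos (q-p)).
      pose proof (Rabs_pos (r'-r)). pose proof (Rabs_pos (u'-u)). nra.
  - intros r _. replace (p + 2*(1/2)*(q-p)) with q by field.
    replace (q + (2*(1/2)-1)*(p-q)) with q by field. exact Eq.
Qed.

Lemma local {X : TopSpace} (a b : R -> X) (A : R -> Prop) t :
  is_path 0 1 a -> is_path 0 1 b ->
  (forall u, A u -> interval 0 1 u) -> (forall u, A u -> a u = b u) ->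
  A t -> ~ aw X (a t) ->
  exists e, 0 < e /\ forall q, A q -> Rabs (q - t) < e -> q <> t ->
     path_homotopic (Rmin t q) (Rmax t q) a b.
Proof.
  intros Ha Hb HA Eab At Hnaw.
  destruct (classic (exists e, 0 < e /\ forall q, A q -> Rabs (q - t) < e -> q <> t ->
     path_homotopic (Rmin t q) (Rmax t q) a b)) as [|Hno]; auto.
  exfalso.
  assert (Hq : forall n:nat, exists q, A q /\ Rabs (q - t) < / (INR n + 1) /\ q <> t /\
              ~ path_homotopic (Rmin t q) (Rmax t q) a b).
  { intro n. apply NNPP. intro Hc. apply Hno. exists (/(INR n + 1)). split.
    - apply Rinv_0_lt_compat. pose proof (pos_INR n). lra.
    - intros q Aq Hqe Hqt. apply NNPP. intro Hnh. apply Hc. exists q. auto. }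
  set (qs := fun n => proj1_sig (constructive_indefinite_description _ (Hq n))).
  assert (Hqs : forall n, A (qs n) /\ Rabs (qs n - t) < / (INR n + 1) /\ qs n <> t /\
              ~ path_homotopic (Rmin t (qs n)) (Rmax t (qs n)) a b).
  { intro n. unfold qs. exact (proj2_sig (constructive_indefinite_description _ (Hq n))). }
  apply Hnaw. exists (fun n => loopf a b t (qs n)). split; [split|].
  - intro n. destruct (Hqs n) as [Aq _]. split; [|split].
    + apply loop_is_path; auto.
    + unfold loopf. destruct Rle_dec; [|lra]. f_equal; ring.
    + unfold loopf. destruct Rle_dec; [lra|]. rewrite Eab by auto. f_equal; ring.
  - intros U HU HUx.
    destruct (Ha t (HA t At) U HU HUx) as [da [Hda Hda']].
    rewrite (Eab t At) in HUx.
    destruct (Hb t (HA t At) U HU HUx) as [db [Hdb Hdb']].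
    destruct (archimed_cor1 (Rmin da db) (Rmin_pos _ _ Hda Hdb)) as [N [HN HN0]].
    exists N. intros n Hn u Hu.
    destruct (Hqs n) as [Aq [Hqt _]].
    assert (HNn : / (INR n + 1) <= / INR N).
    { apply Rinv_le_contravar. apply lt_0_INR; auto.
      apply le_INR in Hn. lra. }
    pose proof (Rmin_l da db). pose proof (Rmin_r da db).
    unfold loopf. unfold interval in Hu. destruct Rle_dec.
    + replace (t + 2*u*(qs n - t)) with (t + (2*u)*(qs n - t)) by ring.
      apply Hda'.
      * apply convex_in; auto. lra.
      * pose proof (convex_dist t (qs n) (2*u) ltac:(lra)). lra.
    + apply Hdb'.
      * apply convex_in; auto. lra.
      * pose proof (convex_dist2 (qs n) t (2*u-1) ltac:(lra)).
        pose proof (Rabs_minus_sym t (qs n)). lra.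
  - intros n Htr. destruct (Hqs n) as [Aq [_ [Hne Hnh]]]. apply Hnh.
    apply (loop_triv a b t (qs n)); auto.
    unfold Rmin, Rmax. destruct Rle_dec; auto.
Qed.

Theorem mainTheorem11 (X : TopSpace) (a b : R -> X) (A : R -> Prop) :
  is_path 0 1 a -> is_path 0 1 b ->
  homotopy_cut_set 0 1 a b A ->
  (forall u, A u -> ~ aw X (a u)) ->
  path_homotopic 0 1 a b.
Proof.
  intros Ha Hb [HA [Hcl [_ [A0 [A1 [Eab Hgap]]]]]] Hnaw.
  set (S := fun t => A t /\ path_homotopic 0 t a b).
  assert (S0 : S 0).
  { split; auto. exists (fun r u => a 0). split; [|split; [|split]].
    - intros r u _ U _ HU. exists 1. split; [lra|]. intros; auto.
    - intros u Hu. unfold interval in Hu. replace u with 0 by lra. auto.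
    - intros u Hu. unfold interval in Hu. replace u with 0 by lra. auto.
    - intros; split; auto. }
  assert (HSb : bound S).
  { exists 1. intros x [Ax _]. apply (HA x Ax). }
  destruct (completeness S HSb (ex_intro _ 0 S0)) as [m [Hub Hlub]].
  assert (Hm1 : m <= 1).
  { apply Hlub. intros x [Ax _]. apply (HA x Ax). }
  assert (Hm0 : 0 <= m) by (apply Hub; auto).
  assert (Am : A m).
  { apply NNPP. intro Hn. destruct (Hcl m Hn) as [d [Hd Hd']].
    assert (m <= m - d); [|lra].
    apply Hlub. intros x Sx. destruct (Rle_dec x (m-d)); auto.
    exfalso. apply (Hd' x); [|apply Sx].
    pose proof (Hub x Sx). unfold Rabs; destruct Rcase_abs; lra. }
  destruct (local a b A m Ha Hb HA Eab Am (Hnaw m Am)) as [e [He Hloc]].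
  assert (Sm : S m).
  { destruct (classic (exists s, S s /\ m - e < s)) as [[s [Ss Hs]]|Hno].
    - pose proof (Hub s Ss). destruct (Req_dec s m) as [->|Hne]; auto.
      split; auto.
      assert (Hh := Hloc s (proj1 Ss) ltac:(unfold Rabs; destruct Rcase_abs; lra) Hne).
      rewrite Rmin_right, Rmax_left in Hh by lra.
      apply (concat a b 0 s m); auto.
      + pose proof (HA s (proj1 Ss)). unfold interval in *. lra.
      + apply Ss.
    - exfalso. assert (m <= m - e); [|lra]. apply Hlub. intros x Sx.
      destruct (Rle_dec x (m-e)); auto. exfalso. apply Hno. exists x. split; auto; lra. }
  destruct (Req_dec m 1) as [E1|Hne1].
  { rewrite <- E1. apply Sm. }
  exfalso.
  destruct (classic (exists q, A q /\ m < q < m + e)) as [[q [Aq Hq]]|Hno].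
  - assert (Hh := Hloc q Aq ltac:(unfold Rabs; destruct Rcase_abs; lra) ltac:(lra)).
    rewrite Rmin_left, Rmax_right in Hh by lra.
    assert (Sq : S q).
    { split; auto. apply (concat a b 0 m q); auto; [lra| apply Sm]. }
    pose proof (Hub q Sq). lra.
  - set (E := fun y => y <= 1 /\ forall q, A q -> m < q -> y <= q).
    assert (HEb : bound E) by (exists 1; intros y [Hy _]; auto).
    assert (Em : E m) by (split; auto; intros; lra).
    destruct (completeness E HEb (ex_intro _ m Em)) as [d [Hubd Hlubd]].
    assert (Hge : forall q, A q -> m < q -> m + e <= q).
    { intros q Aq Hq. destruct (Rle_dec (m+e) q); auto. exfalso. apply Hno.
      exists q. split; auto; lra. }
    assert (Ey0 : E (Rmin (m+e) 1)).
    { split; [apply Rmin_r|]. intros q Aq Hq. pose proof (Rmin_l (m+e) 1).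
      pose proof (Hge q Aq Hq). lra. }
    assert (Hdm : m < d).
    { pose proof (Hubd _ Ey0). unfold Rmin in *; destruct Rle_dec; lra. }
    assert (Hdq : forall q, A q -> m < q -> d <= q).
    { intros q Aq Hq. apply Hlubd. intros y [_ Hy]. auto. }
    assert (Hd1 : d <= 1) by (apply Hlubd; intros y [Hy _]; auto).
    assert (Ad : A d).
    { apply NNPP. intro Hn. destruct (Hcl d Hn) as [dl [Hdl Hdl']].
      assert (Hfar : forall q, A q -> m < q -> d + dl <= q).
      { intros q Aq Hq. pose proof (Hdq q Aq Hq).
        destruct (Rle_dec (d+dl) q); auto. exfalso. apply (Hdl' q); auto.
        unfold Rabs; destruct Rcase_abs; lra. }
      assert (E (d + dl/2)).
      { split.
        - pose proof (Hfar 1 A1 ltac:(lra)). lra.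
        - intros q Aq Hq. pose proof (Hfar q Aq Hq). lra. }
      pose proof (Hubd _ H). lra. }
    assert (Hg : gap 0 1 A m d).
    { unfold gap. repeat split; auto; try lra.
      intros u Hu Au. pose proof (Hdq u Au ltac:(lra)). lra. }
    assert (Sd : S d).
    { split; auto. apply (concat a b 0 m d); [lra | apply Sm | apply Hgap; auto]. }
    pose proof (Hub d Sd). lra.
Qed.
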